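(* Let $s\in(0,1/2]$. For all $a,\ell\in\mathbb N$ with $2s\ell>1$, \[\sum_{M=1}^{\infty}\prod_{i=0}^{\ell}\frac{1}{(a+iM)^{2s}}\le\frac{1}{a^{2s\ell-1}}\cdot\frac{2s\ell}{2s\ell-1}.\] *)

(* Defs.v *)
From mathcomp Require Import all_boot.

(* Main.v *)
Require Import Defs.
From HB Require Import structures.
From mathcomp Require Import all_boot all_order all_algebra.
From mathcomp Require Import all_classical all_reals all_analysis.
From mathcomp Require Import ring lra.
Import Order.TTheory GRing.Theory Num.Theory.
Local Open Scope ring_scope.

Lemma key {R : realType} {q y : R} : 0 < q -> 1 <= y ->
  q * expR (- ((q + 1) * ln (y + 1))) <= expR (- (q * ln y)) - expR (- (q * ln (y + 1))).
Proof.
move=> q0 y1.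
have y0 : 0 < y by lra.
have y10 : 0 < y + 1 by lra.
set L := ln (y + 1).
have inv1 : (y + 1)^-1 < 1 by rewrite invf_lt1 //; lra.
have inv0 : 0 < (y + 1)^-1 by rewrite invr_gt0.
have e : y = (y + 1) * (1 + - (y + 1)^-1) by field; rewrite gt_eqF.
have h1 : ln y <= L - (y + 1)^-1.
  rewrite {1}e lnM ?inE ?posrE //; last by lra.
  rewrite lerD2l; apply: le_ln1Dx; lra.
set E := expR (- (q * L)).
have E0 : 0 < E by rewrite expR_gt0.
have h2 : E * (1 + q / (y + 1)) <= expR (- (q * ln y)).
  apply: (le_trans (y := E * expR (q / (y+1)))).
    by rewrite ler_pM2l // expR_ge1Dx.
  rewrite /E -expRD ler_expR.
  have : q * ln y <= q * (L - (y + 1)^-1) by rewrite ler_pM2l.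
  lra.
have h3 : expR (- ((q + 1) * L)) = E / (y + 1).
  by rewrite mulrDl mul1r opprD expRD -/E expRN /L lnK.
have -> : q * expR (- ((q + 1) * L)) = E * (1 + q / (y + 1)) - E.
  by rewrite h3; field; rewrite gt_eqF.
by rewrite lerD2r.
Qed.

Theorem lemma2p2 (R : realType) (s : R) (a l : nat) :
  0 < s -> s <= 1 / 2 -> (0 < a)%N -> 1 < 2 * s * l%:R ->
  (\sum_(1 <= M <oo)
      (\prod_(i < l.+1) ((a + i * M)%:R `^ (2 * s))^-1)%:E <=
   ((a%:R `^ (2 * s * l%:R - 1))^-1 * ((2 * s * l%:R) / (2 * s * l%:R - 1)))%:E)%E.
Proof.
move=> s0 s12 a0 pgt1.
set p := 2 * s * l%:R.
set q := p - 1.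
have q0 : 0 < q by rewrite /q subr_gt0.
have aR : 1 <= a%:R :> R by rewrite ler1n.
have aR0 : 0 < a%:R :> R by rewrite ltr0n.
have s20 : 0 < 2 * s by rewrite mulr_gt0.
set A := expR (- (2 * s * ln (a%:R : R))).
have A0 : 0 < A by apply: expR_gt0.
have A1 : A <= 1.
  rewrite /A -[X in _ <= X]expR0 ler_expR oppr_le0; apply: mulr_ge0; [exact: ltW | exact: ln_ge0].
pose g := fun x : R => expR (- (q * ln x)).
pose t := fun M : nat => \prod_(i < l.+1) ((a + i * M)%:R `^ (2 * s))^-1 : R.
have fac : forall x : nat, (0 < x)%N -> (x%:R `^ (2 * s) : R)^-1 = expR (- (2 * s * ln (x%:R : R))).
  by move=> x x0; rewrite /powR pnatr_eq0 (negbTE (lt0n_neq0 x0)) expRN.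
have tb : forall M, t M.+1 <= A * expR (- (p * ln ((a + M.+1)%:R : R))).
  move=> M; rewrite /t big_ord_recl /= mul0n addn0 fac // -/A.
  rewrite ler_pM2l //.
  have -> : expR (- (p * ln ((a + M.+1)%:R : R))) =
     \prod_(i < l) expR (- (2*s*ln ((a+M.+1)%:R : R))).
    rewrite prodr_const card_ord -expRM_natr /p; congr expR; ring.
  apply: ler_prod => i _.
  rewrite fac ?addn_gt0 ?a0 // expR_ge0 /= ler_expR lerN2 ler_pM2l //.
  rewrite ler_ln ?posrE ?ltr0n ?addn_gt0 ?a0 // ler_nat leq_add2l.
  by rewrite /bump leq0n add1n mulSn leq_addr.
have stepB : forall N, \sum_(1 <= M < N.+1) t M + A / q * g (a + N)%:R <= A / q * g a%:R.
  elim=> [|N IH]; first by rewrite big_geq // add0r addn0.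
  rewrite big_nat_recr //= -addrA; apply: le_trans IH; rewrite lerD2l.
  have e1 : (a + N.+1)%:R = (a + N)%:R + 1 :> R by rewrite addnS -addn1 natrD.
  have y1 : 1 <= (a + N)%:R :> R by rewrite ler1n addn_gt0 a0.
  have k := key q0 y1.
  have Aq : 0 <= A / q by rewrite divr_ge0 // ltW.
  have k' := ler_wpM2l Aq k.
  rewrite mulrA divfK ?gt_eqF // /q subrK -/p mulrBr in k'.
  have := tb N; rewrite e1 /g.
  lra.
have partial : forall n, \sum_(1 <= M < n) t M <= A / q * g a%:R.
  have gp : forall x, 0 <= g x by move=> x; rewrite /g expR_ge0.
  have cg : 0 <= A / q * g a%:R by rewrite mulr_ge0 // divr_ge0 // ltW.
  case=> [|N]; first by rewrite big_geq.
  have := stepB N; have := gp (a + N)%:R.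
  have Aq : 0 <= A / q by rewrite divr_ge0 // ltW.
  move=> h1 h2; apply: le_trans h2; rewrite lerDl; exact: mulr_ge0.
apply: lime_le.
  apply: is_cvg_nneseries => n _ _; rewrite lee_fin /t; apply: prodr_ge0 => i _.
  by rewrite invr_ge0 powR_ge0.
apply: nearW => n; rewrite sumEFin lee_fin; apply: (le_trans (partial n)).
have -> : (a%:R `^ q)^-1 = g a%:R.
  by rewrite /g /powR gt_eqF // expRN.
rewrite [X in _ <= X]mulrC; apply: ler_wpM2r; first by rewrite /g expR_ge0.
by rewrite ler_pM2r ?invr_gt0 //; apply: le_trans A1 (ltW pgt1).
Qed.
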